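(* In the setting below, let $p,q\in X$ with $S_p\subsetneq S_q$ and $|S_p|\ge 2$, and write $p=\sum_{e_i\in S_p}\lambda_ie_i$, $q=\sum_{e_i\in S_q}\theta_ie_i$ (normalized by the convention). Then $\lambda_i=\theta_i$ for every $e_i\in S_p$.
   Context: Setting: $E=\{e_0,\dots,e_n\}\subset\mathbb R^n$ is the vertex set of an $n$-simplex with $e_0+\cdots+e_n=0$, and $X\subset\mathbb R^n\setminus\{0\}$ is a finite set with $E\subseteq X$, no element of $X$ a positive multiple of another, such that every $n+1$ points of $X$ are in good position. (A finite set $A$ is in conical position if $0\notin\operatorname{conv}A$ and no point of $A$ lies in the positive hull—set of nonnegative linear combinations—of the other points; it is in good position otherwise.) For $p\in X$, the support $S_p$ is the minimal subset of $E$ whose positive hull contains $p$; then $p=\sum_{e_i\in S_p}\lambda_ie_i$ uniquely with all $\lambda_i>0$. Convention: each $p\in X$ is replaced by the positive multiple for which $\min_{e_i\in S_p}\lambda_i=1$. *)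

(* Defs.v *)
From HB Require Import structures.
From mathcomp Require Import all_boot all_order all_algebra.
From mathcomp Require Import reals.
Set Implicit Arguments. Unset Strict Implicit. Unset Printing Implicit Defensive.
Import Order.TTheory GRing.Theory Num.Theory.
Local Open Scope ring_scope.

Section Defs.
Variables (R : realType) (n : nat).
Notation V := ('rV[R]_n).

Definition in_conv (s : seq V) (x : V) : Prop :=
  exists c : 'I_(size s) -> R,
    (forall i, 0 <= c i) /\ \sum_i c i = 1 /\ \sum_i c i *: s`_i = x.

Definition in_pos_hull (s : seq V) (x : V) : Prop :=
  exists c : 'I_(size s) -> R,
    (forall i, 0 <= c i) /\ \sum_i c i *: s`_i = x.

(* A finite set of points, given as a duplicate-free sequence A, is in
   conical position iff 0 is not in conv A and no point of A lies in the
   positive hull of the other points. *)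
Definition conical_position (A : seq V) : Prop :=
  ~ in_conv A 0 /\ forall a, a \in A -> ~ in_pos_hull (rem a A) a.

Definition good_position (A : seq V) : Prop := ~ conical_position A.

Definition affinely_independent (e : 'I_n.+1 -> V) : Prop :=
  forall c : 'I_n.+1 -> R,
    \sum_i c i = 0 -> \sum_i c i *: e i = 0 -> forall i, c i = 0.

Definition in_pos_hull_idx (e : 'I_n.+1 -> V) (S : {set 'I_n.+1}) (p : V) : Prop :=
  exists c : 'I_n.+1 -> R, (forall i, 0 <= c i) /\ p = \sum_(i in S) c i *: e i.

Definition is_support (e : 'I_n.+1 -> V) (p : V) (S : {set 'I_n.+1}) : Prop :=
  in_pos_hull_idx e S p /\
  forall S' : {set 'I_n.+1}, S' \proper S -> ~ in_pos_hull_idx e S' p.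

Definition pos_repr (e : 'I_n.+1 -> V) (p : V) (S : {set 'I_n.+1}) (c : 'I_n.+1 -> R) : Prop :=
  (forall i, i \in S -> 0 < c i) /\ p = \sum_(i in S) c i *: e i.

Definition min_coef_one (S : {set 'I_n.+1}) (c : 'I_n.+1 -> R) : Prop :=
  (exists2 i, i \in S & c i = 1) /\ (forall i, i \in S -> 1 <= c i).

End Defs.

(* Main.v *)
Require Import Defs.
From HB Require Import structures.
From mathcomp Require Import all_boot all_order all_algebra.
From mathcomp Require Import reals.
From mathcomp Require Import ring lra.
Set Implicit Arguments. Unset Strict Implicit.
Import Order.TTheory GRing.Theory Num.Theory.
Local Open Scope ring_scope.

Section Gen.
Variables (R : realType) (n : nat).
Notation V := ('rV[R]_n).

Definition liftc (s : seq V) (c : 'I_(size s) -> R) (v : V) : R :=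
  oapp c 0 (insub (index v s)).

Lemma liftc_sum (s : seq V) (c : 'I_(size s) -> R) (F : R -> V -> V) :
  uniq s -> \sum_i F (c i) s`_i = \sum_(v <- s) F (liftc c v) v.
Proof.
move=> us; rewrite (big_index_uniq _ _ _ us) /= big_seq [RHS]big_seq.
apply: eq_bigr => v vs; rewrite /liftc.
case: insubP => [i _ iE|] /=; last by rewrite index_mem vs.
by rewrite iE nth_index.
Qed.

Lemma liftc_out (s : seq V) (c : 'I_(size s) -> R) v : v \notin s -> liftc c v = 0.
Proof. by move=> vs; rewrite /liftc insubF //= index_mem (negbTE vs). Qed.

Lemma liftc_ge0 (s : seq V) (c : 'I_(size s) -> R) v :
  (forall i, 0 <= c i) -> 0 <= liftc c v.
Proof. by move=> h; rewrite /liftc; case: insub => //=. Qed.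

Lemma liftc_lin (s : seq V) (c : 'I_(size s) -> R) :
  uniq s -> \sum_i c i *: s`_i = \sum_(v <- s) liftc c v *: v.
Proof.
move=> us; exact: (@liftc_sum s c (fun a v => a *: v) us).
Qed.

Lemma liftc_sumc (s : seq V) (c : 'I_(size s) -> R) :
  uniq s -> \sum_i c i = \sum_(v <- s) liftc c v.
Proof.
move=> us; rewrite (big_index_uniq _ _ _ us) /=.
by apply: eq_bigr => v _; rewrite /liftc.
Qed.

Lemma conical_of (A : seq V) : uniq A ->
 (forall g : V -> R, \sum_(v <- A) g v *: v = 0 ->
   (forall v, v \in A -> g v = 0) \/
   exists v1 v2, [/\ v1 \in A, v2 \in A, v1 != v2, g v1 < 0 & g v2 < 0]) ->
 conical_position A.
Proof.
move=> uA H; split.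
  case=> c [c0 [c1 c2]].
  rewrite (liftc_lin _ uA) in c2; rewrite (liftc_sumc _ uA) in c1.
  case: (H _ c2) => [z|[v1 [v2 [_ _ _ h1 _]]]].
    have s0 : \sum_(v <- A) liftc c v = 0 by rewrite big_seq big1 // => v /z.
    by move: c1; rewrite s0 => /eqP; rewrite eq_sym oner_eq0.
  by move: (liftc_ge0 v1 c0); rewrite leNgt h1.
move=> a aA [c [c0 c1]].
have ur : uniq (rem a A) by exact: rem_uniq.
rewrite (liftc_lin _ ur) in c1.
pose g v := if v == a then -1 else liftc c v.
have hg : \sum_(v <- A) g v *: v = 0.
  rewrite (perm_big _ (perm_to_rem aA)) big_cons /g eqxx scaleN1r.
  have -> : \sum_(v <- rem a A) (if v == a then -1 else liftc c v) *: v = a.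
    rewrite -[RHS]c1 big_seq [RHS]big_seq.
    apply: eq_bigr => v vr.
    case: eqP => // va; move: vr; rewrite va.
    by rewrite (mem_rem_uniqF _ uA).
  exact: addNr.
have gpos : forall v, v != a -> 0 <= g v.
  by move=> v /negbTE va; rewrite /g va; apply: liftc_ge0.
case: (H g hg) => [z|[v1 [v2 [_ _ v12 h1 h2]]]].
  by move: (z a aA); rewrite /g eqxx => /eqP; rewrite oppr_eq0 oner_eq0.
case: (eqVneq v1 a) => [v1a|v1a]; last by move: (gpos _ v1a); rewrite leNgt h1.
have v2a : v2 != a by rewrite -v1a eq_sym.
by move: (gpos _ v2a); rewrite leNgt h2.
Qed.

Variables (e : 'I_n.+1 -> V).
Hypothesis he_aff : affinely_independent e.
Hypothesis he_sum : \sum_i e i = 0.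

Lemma const_coef (c : 'I_n.+1 -> R) :
  \sum_i c i *: e i = 0 -> forall i j, c i = c j.
Proof.
move=> hc.
pose m := (\sum_i c i) / n.+1%:R.
have h := he_aff (c := fun i => c i - m).
have hm : forall i, c i = m.
  move=> i; apply/eqP; rewrite -subr_eq0; apply/eqP; apply: h.
    rewrite sumrB sumr_const card_ord -mulr_natr /m divfK ?subrr //.
    by rewrite pnatr_eq0.
  rewrite (eq_bigr (fun i => c i *: e i - m *: e i)); last by move=> j _; rewrite scalerBl.
  by rewrite sumrB hc -scaler_sumr he_sum scaler0 subrr.
by move=> i j; rewrite !hm.
Qed.

Lemma sum_delta (i : 'I_n.+1) : \sum_k (k == i)%:R *: e k = e i.
Proof.
rewrite (eq_bigr (fun k => if k == i then e k else 0)).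
  by rewrite -big_mkcond big_pred1_eq.
by move=> k _; case: eqP => _; rewrite ?scale1r ?scale0r.
Qed.

Lemma e_inj : injective e.
Proof.
move=> i j hij; apply/eqP/negPn/negP => nij.
have hs : \sum_k ((k == i)%:R - (k == j)%:R) *: e k = 0.
  rewrite (eq_bigr (fun k => (k == i)%:R *: e k - (k == j)%:R *: e k)).
    by rewrite sumrB !sum_delta hij subrr.
  by move=> k _; rewrite scalerBl.
have := const_coef hs i j.
rewrite eqxx (negbTE nij) eq_sym (negbTE nij) eqxx /=.
lra.
Qed.

Lemma dist_e (k : 'I_n.+1 -> R) (a b j : 'I_n.+1) :
  k b = 0 -> 0 < k a -> j != a -> \sum_i k i *: e i != e j.
Proof.
move=> kb ka ja; apply/eqP => hx.
have hs : \sum_i (k i - (i == j)%:R) *: e i = 0.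
  rewrite (eq_bigr (fun i => k i *: e i - (i == j)%:R *: e i)).
    by rewrite sumrB sum_delta hx subrr.
  by move=> i _; rewrite scalerBl.
have := const_coef hs a b.
rewrite kb eq_sym (negbTE ja) /=.
case: (b == j) => /=; lra.
Qed.

Definition kp (S : {set 'I_n.+1}) (k : 'I_n.+1 -> R) i := if i \in S then k i else 0.

Lemma kp_sum (S : {set 'I_n.+1}) (k : 'I_n.+1 -> R) : \sum_(i in S) k i *: e i = \sum_i kp S k i *: e i.
Proof.
rewrite big_mkcond; apply: eq_bigr => i _; rewrite /kp.
by case: (i \in S); rewrite ?scale0r.
Qed.

Lemma map_sum (P : {set 'I_n.+1}) (g : V -> R) :
  \sum_(v <- map e (enum P)) g v *: v = \sum_i (if i \in P then g (e i) else 0) *: e i.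
Proof.
rewrite big_map big_enum big_mkcond; apply: eq_bigr => i _.
by case: (i \in P); rewrite ?scale0r.
Qed.

Lemma scal_sum (a : R) (k : 'I_n.+1 -> R) :
  a *: \sum_i k i *: e i = \sum_i (a * k i) *: e i.
Proof. by rewrite scaler_sumr; apply: eq_bigr => i _; rewrite scalerA. Qed.


Variable X : seq V.
Hypothesis hEX : forall i, e i \in X.
Hypothesis hgood : forall A : seq V, uniq A -> size A = n.+1 ->
             {subset A <= X} -> good_position A.

Lemma step2 (x : V) (S : {set 'I_n.+1}) (k : 'I_n.+1 -> R) (b m j1 j2 : 'I_n.+1) :
  x \in X -> pos_repr e x S k -> b \notin S -> m \in S -> j1 \in S -> j2 \in S ->
  j1 != j2 -> k m < k j1 -> k m < k j2 -> False.
Proof.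
move=> xX [kpos xE] bS mS j1S j2S j12 h1 h2.
rewrite kp_sum in xE.
set P := [set~ m].
set A := x :: map e (enum P).
have kb : kp S k b = 0 by rewrite /kp (negbTE bS).
have km : kp S k m = k m by rewrite /kp mS.
have kj1 : kp S k j1 = k j1 by rewrite /kp j1S.
have kj2 : kp S k j2 = k j2 by rewrite /kp j2S.
have km0 : 0 < k m := kpos _ mS.
have bm : b != m by apply: contraNneq bS => ->.
have xe : forall j, j != m -> x != e j.
  by move=> j jm; rewrite xE; apply: (dist_e (a:=m) kb); rewrite ?km.
have uA : uniq A.
  rewrite /A /= map_inj_uniq ?enum_uniq ?andbT; last exact: e_inj.
  apply/negP => /mapP [j]; rewrite mem_enum in_setC1 => jm xej.
  by move: (xe j jm); rewrite xej eqxx.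
have sA : size A = n.+1.
  by rewrite /A /= size_map -cardE cardsC1 card_ord.
have subA : {subset A <= X}.
  move=> v; rewrite inE => /orP[/eqP -> //|/mapP[j _ ->]]; exact: hEX.
apply: (hgood uA sA subA); apply: conical_of => // g hg.
have xs : g x *: x = \sum_i (g x * kp S k i) *: e i by rewrite {2}xE scal_sum.
rewrite big_cons map_sum xs -big_split /= in hg.
have hc : forall i, g x * kp S k i + (if i \in P then g (e i) else 0) = g x * k m.
  move=> i; have := const_coef (c := fun i => g x * kp S k i + (if i \in P then g (e i) else 0)).
  move=> /(_ _ i m); rewrite km /P !in_setC1 eqxx /= addr0; apply.
  by rewrite -[RHS]hg; apply: eq_bigr => j _; rewrite scalerDl.
have hj : forall j, j != m -> g (e j) = g x * (k m - kp S k j).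
  move=> j jm; have := hc j; rewrite /P in_setC1 jm => h; rewrite mulrBr -h; ring.
have j1m : j1 != m by apply: contraTneq h1 => ->; rewrite ltxx.
have j2m : j2 != m by apply: contraTneq h2 => ->; rewrite ltxx.
have inA : forall j, j != m -> e j \in A.
  by move=> j jm; rewrite /A inE; apply/orP; right; apply: map_f; rewrite mem_enum in_setC1.
case: (ltrgt0P (g x)) => [gpos|gneg|g0].
- right; exists (e j1), (e j2); split; rewrite ?inA //.
  + by apply: contra j12 => /eqP /e_inj ->.
  + by rewrite hj // kj1 pmulr_rlt0 // subr_lt0.
  + by rewrite hj // kj2 pmulr_rlt0 // subr_lt0.
- right; exists x, (e b); split; rewrite ?inA ?mem_head ?xe //.
  by rewrite hj // kb subr0 nmulr_rlt0.
- left => v; rewrite inE => /orP[/eqP -> //|/mapP[j]].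
  rewrite mem_enum in_setC1 => jm ->; by rewrite hj // g0 mul0r.
Qed.


Lemma step3 (p q : V) (Sp Sq : {set 'I_n.+1}) (l t : 'I_n.+1 -> R) (a b j m : 'I_n.+1) :
  p \in X -> q \in X -> pos_repr e p Sp l -> pos_repr e q Sq t ->
  a \in Sp -> a \in Sq -> j \in Sp -> j \in Sq -> j != a ->
  b \notin Sp -> b \notin Sq -> m \in Sq -> m \notin Sp ->
  t j * l a < t a * l j -> False.
Proof.
move=> pX qX [lpos pE] [tpos qE] aSp aSq jSp jSq ja bSp bSq mSq mSp hlt.
rewrite kp_sum in pE; rewrite kp_sum in qE.
set P := ~: [set a; b].
set A := p :: q :: map e (enum P).
have lb : kp Sp l b = 0 by rewrite /kp (negbTE bSp).
have tb : kp Sq t b = 0 by rewrite /kp (negbTE bSq).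
have lm : kp Sp l m = 0 by rewrite /kp (negbTE mSp).
have tm : kp Sq t m = t m by rewrite /kp mSq.
have la : kp Sp l a = l a by rewrite /kp aSp.
have ta : kp Sq t a = t a by rewrite /kp aSq.
have lj : kp Sp l j = l j by rewrite /kp jSp.
have tj : kp Sq t j = t j by rewrite /kp jSq.
have la0 : 0 < l a := lpos _ aSp.
have ta0 : 0 < t a := tpos _ aSq.
have lj0 : 0 < l j := lpos _ jSp.
have tj0 : 0 < t j := tpos _ jSq.
have tm0 : 0 < t m := tpos _ mSq.
have ab : a != b by apply: contraNneq bSq => <-.
have inP : forall i, (i \in P) = (i != a) && (i != b).
  by move=> i; rewrite /P inE in_set2 negb_or.
have pe : forall i, i != a -> p != e i.
  by move=> i ia; rewrite pE; apply: (dist_e (a:=a) lb); rewrite ?la.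
have qe : forall i, i != a -> q != e i.
  by move=> i ia; rewrite qE; apply: (dist_e (a:=a) tb); rewrite ?ta.
have pq : p != q.
  apply/eqP => hpq.
  have hs : \sum_i (kp Sp l i - kp Sq t i) *: e i = 0.
    rewrite (eq_bigr (fun i => kp Sp l i *: e i - kp Sq t i *: e i)).
      by rewrite sumrB -pE -qE hpq subrr.
    by move=> i _; rewrite scalerBl.
  have := const_coef hs m b; rewrite lm tm lb tb; lra.
have ma : m != a by apply: contraNneq mSp => ->.
have mb : m != b by apply: contraNneq bSq => <-.
have inA : forall i, i \in P -> e i \in A.
  by move=> i iP; rewrite /A !inE; apply/orP; right; apply/orP; right; apply: map_f; rewrite mem_enum.
have uA : uniq A.
  rewrite /A /= map_inj_uniq ?enum_uniq ?andbT; last exact: e_inj.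
  rewrite inE negb_or pq /=.
  apply/andP; split; apply/negP => /mapP [i]; rewrite mem_enum inP => /andP[ia _] hi.
    by move: (pe i ia); rewrite hi eqxx.
  by move: (qe i ia); rewrite hi eqxx.
have sA : size A = n.+1.
  rewrite /A /= size_map -cardE.
  have h := cardsC [set a; b]; rewrite cards2 ab card_ord in h.
  exact: h.
have subA : {subset A <= X}.
  move=> v; rewrite !inE => /orP[/eqP -> //|/orP[/eqP -> //|/mapP[i _ ->]]]; exact: hEX.
apply: (hgood uA sA subA); apply: conical_of => // g hg.
have ps : g p *: p = \sum_i (g p * kp Sp l i) *: e i by rewrite {2}pE scal_sum.
have qs : g q *: q = \sum_i (g q * kp Sq t i) *: e i by rewrite {2}qE scal_sum.
rewrite !big_cons map_sum ps qs -!big_split /= in hg.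
have hc : forall i, g p * kp Sp l i + (g q * kp Sq t i + (if i \in P then g (e i) else 0)) = 0.
  move=> i; have := const_coef (c := fun i => g p * kp Sp l i + (g q * kp Sq t i + (if i \in P then g (e i) else 0))).
  move=> /(_ _ i b); rewrite lb tb (inP b) eqxx andbF /= !mulr0 !addr0; apply.
  by rewrite -[RHS]hg; apply: eq_bigr => k _; rewrite !scalerDl.
have hA : g p * l a + g q * t a = 0.
  by have := hc a; rewrite la ta inP eqxx /= addr0.
have hi : forall i, i \in P -> g (e i) = - (g p * kp Sp l i + g q * kp Sq t i).
  move=> i iP; have := hc i; rewrite iP => h; apply/eqP; rewrite -addr_eq0; apply/eqP.
  by rewrite -h; ring.
have jP : j \in P by rewrite inP ja /=; apply: contraNneq bSq => <-.
have mP : m \in P by rewrite inP ma mb.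
case: (ltrgt0P (g p)) => [gpos|gneg|g0].
- right; exists q, (e j); split; rewrite ?inA ?qe //.
  + by rewrite /A !inE eqxx orbT.
  + nra.
  + rewrite hi // lj tj oppr_lt0.
    have : 0 < g p * (t a * l j - t j * l a) by apply: mulr_gt0; lra.
    nra.
- right; exists p, (e m); split; rewrite ?inA ?pe ?mem_head //.
  rewrite hi // lm tm mulr0 add0r oppr_lt0.
  have h : 0 < g q * t a by nra.
  by rewrite pmulr_lgt0 // in h; apply: mulr_gt0.
- left => v; rewrite !inE => /orP[/eqP -> //|/orP[/eqP ->|/mapP[i]]].
    nra.
  rewrite mem_enum => iP ->; rewrite hi // g0 !mul0r add0r.
  have -> : g q = 0 by nra.
  by rewrite mul0r oppr0.
Qed.

End Gen.

Theorem proposition6p5 (R : realType) (n : nat)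
  (e : 'I_n.+1 -> 'rV[R]_n) (X : seq 'rV[R]_n)
  (* E is the vertex set of an n-simplex with e_0 + ... + e_n = 0 *)
  (he_aff : affinely_independent e)
  (he_sum : \sum_i e i = 0)
  (* X is a finite subset of R^n \ {0} containing E *)
  (hX0 : forall x, x \in X -> x != 0)
  (hEX : forall i, e i \in X)
  (* no element of X is a positive multiple of another *)
  (hXmult : forall x y, x \in X -> y \in X -> forall t : R, 0 < t -> x = t *: y -> x = y)
  (* every n+1 points of X are in good position *)
  (hgood : forall A : seq 'rV[R]_n, uniq A -> size A = n.+1 ->
             {subset A <= X} -> good_position A)
  (* normalization convention: for every x in X, the coefficients of x in
     its support have minimum 1 *)
  (hnorm : forall x S c, x \in X -> is_support e x S -> pos_repr e x S c ->
             min_coef_one S c)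
  (p q : 'rV[R]_n) (hp : p \in X) (hq : q \in X)
  (Sp Sq : {set 'I_n.+1})
  (hSp : is_support e p Sp) (hSq : is_support e q Sq)
  (hSpq : Sp \proper Sq) (hSp2 : (2 <= #|Sp|)%N)
  (lambda theta : 'I_n.+1 -> R)
  (hlambda : pos_repr e p Sp lambda) (htheta : pos_repr e q Sq theta) :
  forall i, i \in Sp -> lambda i = theta i.
Proof.
move=> i iSp.
have /properP [subpq [m mSq mSp]] := hSpq.
have [b bSq] : exists b, b \notin Sq.
  case: (boolP [exists b, b \notin Sq]) => [/existsP //|/existsPn hall].
  exfalso.
  have allq : forall b, b \in Sq by move=> b; have := hall b; rewrite negbK.
  have [[k kSq tk] tge] := hnorm _ _ _ hq hSq htheta.
  apply: (hSq.2 (Sq :\ k) (properD1 kSq)).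
  exists (fun i => theta i - 1); split.
    by move=> j; rewrite subr_ge0; apply: tge.
  rewrite htheta.2.
  have e1 : \sum_(j in Sq) e j = 0.
    by rewrite -[RHS]he_sum; apply: eq_bigl => j; rewrite allq.
  have e2 : \sum_(j in Sq) (theta j - 1) *: e j = \sum_(j in Sq) theta j *: e j.
    rewrite (eq_bigr (fun j => theta j *: e j - e j)); last by move=> j _; rewrite scalerBl scale1r.
    by rewrite sumrB e1 subr0.
  rewrite -e2 (bigD1 k kSq) /= tk subrr scale0r add0r.
  by apply: eq_bigl => j; rewrite in_setD1 andbC.
have bSp : b \notin Sp by apply: contra bSq; apply: (subsetP subpq).
have [lpos _] := hlambda.
have [tpos _] := htheta.
have ineq : forall a j, a \in Sp -> j \in Sp -> j != a -> ~ (theta j * lambda a < theta a * lambda j).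
  move=> a j aSp jSp ja hlt.
  exact: (step3 he_aff he_sum hEX hgood hp hq hlambda htheta aSp (subsetP subpq _ aSp) jSp
           (subsetP subpq _ jSp) ja bSp bSq mSq mSp hlt).
have eqr : forall a j, a \in Sp -> j \in Sp -> theta j * lambda a = theta a * lambda j.
  move=> a j aSp jSp; case: (eqVneq j a) => [->|ja]; first by rewrite mulrC.
  have h1 := ineq _ _ aSp jSp ja.
  have aj : a != j by rewrite eq_sym.
  have h2 := ineq _ _ jSp aSp aj.
  move/negP: h1; rewrite -leNgt => h1.
  move/negP: h2; rewrite -leNgt => h2.
  by apply/le_anti/andP; split; rewrite // mulrC [X in _ <= X]mulrC.
have [[k kSp lk] lge] := hnorm _ _ _ hp hSp hlambda.
have [[m0 m0Sq tm0] tge] := hnorm _ _ _ hq hSq htheta.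
have kSq := subsetP subpq _ kSp.
have t1 : 1 <= theta k := tge _ kSq.
have tk1 : theta k = 1.
  apply/eqP; rewrite eq_le t1 andbT leNgt; apply/negP => tgt.
  have [j] : exists j, j \in Sp :\ k.
    apply/set0Pn; rewrite -card_gt0.
    by move: hSp2; rewrite (cardsD1 k) kSp.
  rewrite in_setD1 => /andP [jk jSp].
  have hj := eqr _ _ kSp jSp; rewrite lk mulr1 in hj.
  have kj : k != j by rewrite eq_sym.
  have lj1 := lge _ jSp.
  apply: (step2 he_aff he_sum hEX hgood hq htheta bSq m0Sq kSq (subsetP subpq _ jSp) kj).
    by rewrite tm0.
  rewrite tm0 hj; nra.
have := eqr _ _ kSp iSp; rewrite lk mulr1 tk1 mul1r => ->.
by [].
Qed.
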